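(* Let $n>p$ be positive integers, $N$ a real $n\times p$ matrix with $N_{ij}=0$ for $i<j$ and $N_{ii}>0$ for $i=1,\dots,p$, and $X$ a real $n\times p$ matrix with $X_{ij}=0$ for $i<j$. If $NX^{T}$ is skew-symmetric, then $X=0$. *)

(* Defs.v *)
From mathcomp Require Import all_boot all_order all_algebra.
From mathcomp Require Import reals.

(* Main.v *)
Require Import Defs.
From mathcomp Require Import all_boot all_order all_algebra.
From mathcomp Require Import reals.
Import Order.TTheory GRing.Theory Num.Theory.
Local Open Scope ring_scope.

Theorem mainTheorem2 (R : realType) (n p : nat) (Hp : (0 < p)%N) (Hnp : (p < n)%N)
  (N X : 'M[R]_(n, p))
  (HNlow : forall (i : 'I_n) (j : 'I_p), (i < j)%N -> N i j = 0)
  (HNdiag : forall (i : 'I_n) (j : 'I_p), (i : nat) = j -> 0 < N i j)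
  (HXlow : forall (i : 'I_n) (j : 'I_p), (i < j)%N -> X i j = 0)
  (Hskew : (N *m X^T)^T = - (N *m X^T)) :
  X = 0.
Proof.
have Hs : forall i j, (N *m X^T) j i = - (N *m X^T) i j.
  move=> i j; have := congr1 (fun A : 'M[R]_n => A i j) Hskew; by rewrite /= !mxE.
have ME : forall i j, (N *m X^T) i j = \sum_l N i l * X j l.
  by move=> i j; rewrite mxE; apply: eq_bigr => l _; rewrite mxE.
suff H : forall k (j : 'I_n) (l : 'I_p), (l < k)%N -> X j l = 0.
  by apply/matrixP => j l; rewrite mxE; apply: (H p).
elim=> [|k IH] j l; first by [].
rewrite ltnS leq_eqVlt => /orP [/eqP El|]; last exact: IH.
have kp : (k < p)%N by rewrite -El.
have kn : (k < n)%N by apply: ltn_trans Hnp.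
pose kP := Ordinal kp; pose kN := Ordinal kn.
have Nkk : 0 < N kN kP by apply: HNdiag.
have M1 : forall j', (N *m X^T) kN j' = N kN kP * X j' kP.
  move=> j'; rewrite ME (bigD1 kP) //= big1 ?addr0 // => l' Hl'.
  case: (ltngtP l' k) => h.
  - by rewrite (IH j' l' h) mulr0.
  - by rewrite HNlow ?mul0r.
  - have E : l' = kP by exact: val_inj.
    by rewrite E eqxx in Hl'.
have M2 : forall j', (N *m X^T) j' kN = N j' kP * X kN kP.
  move=> j'; rewrite ME (bigD1 kP) //= big1 ?addr0 // => l' Hl'.
  case: (ltngtP l' k) => h.
  - by rewrite (IH kN l' h) mulr0.
  - by rewrite (HXlow kN l') ?mulr0.
  - have E : l' = kP by exact: val_inj.
    by rewrite E eqxx in Hl'.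
have Xkk : X kN kP = 0.
  have h := Hs kN kN; rewrite M1 in h.
  have h2 : (N kN kP * X kN kP) *+ 2 = 0 by rewrite mulr2n {1}h addNr.
  move/eqP: h2; rewrite mulrn_eq0 /= mulf_eq0 (gt_eqF Nkk) /=.
  by move/eqP.
have h := Hs j kN; rewrite M1 M2 Xkk mulr0 oppr0 in h.
move/eqP: h; rewrite mulf_eq0 (gt_eqF Nkk) /= => /eqP.
by have -> : l = kP by exact: val_inj.
Qed.
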